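(* Let $\mathfrak{G}$ be a groupoid of germs of a pseudogroup $\widetilde{\mathfrak{G}}$ acting on a metric space $\mathfrak{G}^{(0)}$. Let $C\subset\mathfrak{G}$ be a compact set and let $\mathcal{U}\subset\widetilde{\mathfrak{G}}$ be a covering of $C$ (each $U\in\mathcal{U}$ viewed as the open set of its germs). Then there exists $\epsilon>0$ such that for every $g\in C$ there exists $U\in\mathcal{U}$ such that $g$ is $\epsilon$-contained in $U$.
   Context: A pseudogroup $\widetilde{\mathfrak{G}}$ on a space $\mathfrak{G}^{(0)}$ is a set of homeomorphisms between open subsets, containing the identity, closed under composition, inverses, restriction to open subsets and unions. A germ is an equivalence class of pairs $(F,x)$, $F\in\widetilde{\mathfrak{G}}$, $x\in\mathrm{Dom}(F)$, where $(F_1,x)=(F_2,x)$ if $F_1,F_2$ agree near $x$; the set $\mathfrak{G}$ of germs is a groupoid with origin $\mathsf{o}(F,x)=x$, target $\mathsf{t}(F,x)=F(x)$, and topology with basis the sets $\{(F,x):x\in\mathrm{Dom}(F)\}$. Each $U\in\widetilde{\mathfrak{G}}$ is identified with the set of its germs; $\mathsf{o}(U)$ denotes its domain. For $U\in\widetilde{\mathfrak{G}}$ and $g\in\mathfrak{G}$, $g$ is $\epsilon$-contained in $U$ if the $\epsilon$-neighborhood of $\mathsf{o}(g)$ is contained in $\mathsf{o}(U)$. *)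

(* Defs.v *)
From Stdlib Require Import Reals List.
Open Scope R_scope.
Set Implicit Arguments.

Section Germs.
Variable X : Type.
Variable d : X -> X -> R.

Definition is_metric : Prop :=
  (forall x y, 0 <= d x y) /\ (forall x y, d x y = 0 <-> x = y) /\
  (forall x y, d x y = d y x) /\ (forall x y z, d x z <= d x y + d y z).

Definition mopen (A : X -> Prop) : Prop :=
  forall x, A x -> exists r, 0 < r /\ forall y, d x y < r -> A y.

(* partial maps: a domain and a (total) function, meaningful on the domain *)
Record pmap := PMap { pdom : X -> Prop; pfun : X -> X }.

Definition pimage (F : pmap) (y : X) : Prop := exists x, pdom F x /\ pfun F x = y.

Definition cont_on (D : X -> Prop) (f : X -> X) : Prop :=
  forall x, D x -> forall e, 0 < e -> exists del, 0 < del /\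
    forall y, D y -> d x y < del -> d (f x) (f y) < e.

Definition pinv_of (G F : pmap) : Prop :=
  (forall y, pdom G y <-> pimage F y) /\
  (forall x, pdom F x -> pfun G (pfun F x) = x) /\
  (forall y, pdom G y -> pfun F (pfun G y) = y).

Definition is_phomeo (F : pmap) : Prop :=
  mopen (pdom F) /\ mopen (pimage F) /\ cont_on (pdom F) (pfun F) /\
  exists G, pinv_of G F /\ cont_on (pdom G) (pfun G).

Definition pid : pmap := PMap (fun _ => True) (fun x => x).
Definition pcomp (F G : pmap) : pmap :=
  PMap (fun x => pdom G x /\ pdom F (pfun G x)) (fun x => pfun F (pfun G x)).
Definition prestr (F : pmap) (A : X -> Prop) : pmap :=
  PMap (fun x => pdom F x /\ A x) (pfun F).

(* a pseudogroup: a set of partial homeomorphisms between open subsets,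
   containing the identity, closed under composition, inverses, restriction to
   open subsets and unions; partial maps are identified when they have the
   same domain and agree on it. *)
Definition pseudogroup (PG : pmap -> Prop) : Prop :=
  (forall F, PG F -> is_phomeo F) /\
  (forall F G, PG F -> (forall x, pdom G x <-> pdom F x) ->
     (forall x, pdom F x -> pfun G x = pfun F x) -> PG G) /\
  PG pid /\
  (forall F G, PG F -> PG G -> PG (pcomp F G)) /\
  (forall F, PG F -> exists G, PG G /\ pinv_of G F) /\
  (forall F A, PG F -> mopen A -> PG (prestr F A)) /\
  (forall (I : Type) (Fi : I -> pmap) (F : pmap),
     (forall i, PG (Fi i)) -> is_phomeo F ->
     (forall x, pdom F x <-> exists i, pdom (Fi i) x) ->
     (forall i x, pdom (Fi i) x -> pfun F x = pfun (Fi i) x) -> PG F).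

Variable PG : pmap -> Prop.

Definition valid_pair (p : pmap * X) : Prop := PG (fst p) /\ pdom (fst p) (snd p).

Definition germ_rel (p q : pmap * X) : Prop :=
  snd p = snd q /\ exists r, 0 < r /\ forall y, d (snd p) y < r ->
    pdom (fst p) y /\ pdom (fst q) y /\ pfun (fst p) y = pfun (fst q) y.

(* a germ is an equivalence class of valid pairs *)
Record germ := Germ {
  gset : pmap * X -> Prop;
  gset_class : exists p, valid_pair p /\
     forall q, gset q <-> (valid_pair q /\ germ_rel p q) }.

(* g belongs to U (U identified with the set of its germs) *)
Definition germ_in (U : pmap) (g : germ) : Prop := exists x, gset g (U, x).

Definition germ_origin (g : germ) (x : X) : Prop := exists F, gset g (F, x).

(* open sets of germs: unions of basic sets {(F,x) : x in Dom F}, F in PG *)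
Definition germ_open (W : germ -> Prop) : Prop :=
  forall g, W g -> exists F, PG F /\ germ_in F g /\ forall h, germ_in F h -> W h.

Definition germ_compact (C : germ -> Prop) : Prop :=
  forall (I : Type) (W : I -> germ -> Prop),
    (forall i, germ_open (W i)) -> (forall g, C g -> exists i, W i g) ->
    exists l : list I, forall g, C g -> exists i, In i l /\ W i g.

Definition eps_contained (eps : R) (g : germ) (U : pmap) : Prop :=
  forall x, germ_origin g x -> forall y, d x y < eps -> pdom U y.

End Germs.

(* Main.v *)
Require Import Defs.
From Stdlib Require Import Reals List Lra.
Open Scope R_scope.

Lemma fold_min_pos (I : Type) (r : I -> R) (l : list I) :
  (forall i, 0 < r i) ->
  0 < fold_right (fun i acc => Rmin (r i) acc) 1 l /\
  forall i, In i l -> fold_right (fun i acc => Rmin (r i) acc) 1 l <= r i.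
Proof.
  intros Hr; induction l as [|a l [IH1 IH2]]; simpl.
  - split; [lra| tauto].
  - split.
    + apply Rmin_pos; auto.
    + intros i [->|Hi].
      * apply Rmin_l.
      * eapply Rle_trans; [apply Rmin_r| auto].
Qed.

Theorem lemma2p1p4 (X : Type) (d : X -> X -> R) (Hd : is_metric d)
  (PG : pmap X -> Prop) (HPG : pseudogroup d PG)
  (C : germ d PG -> Prop) (HC : germ_compact C)
  (Ucov : pmap X -> Prop) (HU : forall U, Ucov U -> PG U)
  (Hcov : forall g, C g -> exists U, Ucov U /\ germ_in U g) :
  exists eps, 0 < eps /\
    forall g, C g -> exists U, Ucov U /\ eps_contained eps g U.
Proof.
  destruct Hd as [Hpos [Hzero [Hsym Htri]]].
  destruct HPG as [Hph [_ [_ [_ [_ [Hres _]]]]]].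
  assert (Hball : forall x r, mopen d (fun y => d x y < r)).
  { intros x r y Hy. exists (r - d x y). split; [lra|].
    intros z Hz. specialize (Htri x y z). lra. }
  assert (Hdxx : forall x, d x x = 0) by (intros; apply Hzero; reflexivity).
  assert (Huniq : forall (h : germ d PG) F G y z, gset h (F, y) -> gset h (G, z) -> y = z).
  { intros h F G y z H1 H2. destruct (gset_class h) as [p [_ Hp]].
    apply Hp in H1. apply Hp in H2. destruct H1 as [_ [E1 _]]. destruct H2 as [_ [E2 _]].
    simpl in *. congruence. }
  set (Idx := {t : pmap X * X * R | Ucov (fst (fst t)) /\ 0 < snd t /\
              forall y, d (snd (fst t)) y < 2 * snd t -> pdom (fst (fst t)) y}).
  set (W := fun (i : Idx) (h : germ d PG) =>
     germ_in (prestr (fst (fst (proj1_sig i))) (fun y => d (snd (fst (proj1_sig i))) y < snd (proj1_sig i))) h).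
  destruct (HC Idx W) as [l Hl].
  - intros [[[U x] r] [HUc [Hr HB]]] h Hh. simpl in *.
    eexists. split; [| split; [exact Hh | intros; exact H]].
    apply Hres; [apply HU; exact HUc | apply Hball].
  - intros g Hg. destruct (Hcov g Hg) as [U [HUc [x Hgx]]].
    destruct (gset_class g) as [p [Hvp Hp]].
    pose proof Hgx as Hgx'. apply Hp in Hgx' as [[HPU HdomU] [Esnd [r1 [Hr1 Hr1P]]]].
    simpl in *.
    destruct (proj1 (Hph U HPU) x HdomU) as [r0 [Hr0 Hr0P]].
    assert (Hi : Ucov (fst (fst (U, x, r0/2))) /\ 0 < snd (U, x, r0/2) /\
              forall y, d (snd (fst (U, x, r0/2))) y < 2 * snd (U, x, r0/2) ->
                pdom (fst (fst (U, x, r0/2))) y).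
    { simpl. split; [exact HUc|]. split; [lra|]. intros y Hy. apply Hr0P. lra. }
    exists (exist _ (U, x, r0/2) Hi). unfold W; simpl. exists x.
    apply Hp. split.
    + split; simpl.
      * apply Hres; [exact HPU | apply Hball].
      * split; [exact HdomU | rewrite Hdxx; lra].
    + split; [simpl; exact Esnd|].
      exists (Rmin r1 (r0/2)). split; [apply Rmin_pos; lra|].
      intros y Hy. simpl.
      assert (Hy1 : d (snd p) y < r1) by (eapply Rlt_le_trans; [exact Hy| apply Rmin_l]).
      assert (Hy2 : d (snd p) y < r0/2) by (eapply Rlt_le_trans; [exact Hy| apply Rmin_r]).
      destruct (Hr1P y Hy1) as [A1 [A2 A3]]. rewrite Esnd in Hy2.
      repeat split; auto.
  - destruct (fold_min_pos _ (fun i : Idx => snd (proj1_sig i)) l) as [Hepos Hele].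
    { intros [t [Ha [Ht Hb]]]. exact Ht. }
    eexists. split; [exact Hepos|].
    intros g Hg. destruct (Hl g Hg) as [i [Hin HW]].
    specialize (Hele i Hin). simpl in Hele.
    destruct i as [[[U x] r] [HUc [Hr HB]]]. simpl in *.
    exists U. split; [exact HUc|].
    unfold W in HW. simpl in HW. destruct HW as [y Hgy].
    intros z Hz w Hw. destruct Hz as [F Hz].
    assert (Eyz : y = z) by (eapply Huniq; eauto). subst z.
    destruct (gset_class g) as [p [_ Hp]]. apply Hp in Hgy as [[_ [_ Hxy]] _].
    simpl in Hxy. apply HB. specialize (Htri x y w). lra.
Qed.
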